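(* Let $(x_n)_{n\in\mathbb{N}}$ be a strictly increasing sequence of nonnegative reals with $x_0=0$, let $x_0!=1$, $x_n!=x_1\cdots x_n$, and suppose $\mathcal{N}(t)=\sum_{n\ge0}t^n/x_n!$ has radius of convergence $R=\lim_{n\to\infty}x_{n+1}\in(0,\infty]$. Suppose there is a probability density $w$ on $[0,R)$ with $x_n!=\int_0^R t^n w(t)\,dt$ for all $n\in\mathbb{N}$, and for real $\nu\geq 0$ define $x_\nu!=\int_0^R t^\nu w(t)\,dt$ (assumed finite). For $k\in\mathbb{N}$ and $0\le t<R$ set $$\mathcal{S}_k(t)=\frac{1}{\mathcal{N}(t)}\sum_{n=0}^{\infty}\frac{x_{\frac{k}{2}+n}!}{x_n!\,x_{n+k}!}\,t^{n+k/2}.$$ Then $\mathcal{S}_k(t)\le 1$ for all $k\in\mathbb{N}$ and all $0\le t<R$. *)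

(* Defs.v *)
From HB Require Import structures.
From mathcomp Require Import all_boot all_order all_algebra.
From mathcomp Require Import all_classical all_reals all_analysis.
Set Implicit Arguments. Unset Strict Implicit. Unset Printing Implicit Defensive.
Import Order.TTheory GRing.Theory Num.Theory.
Import numFieldNormedType.Exports.
Local Open Scope classical_set_scope.
Local Open Scope ring_scope.

Definition xfact {R : realType} (x : nat -> R) (n : nat) : R :=
  \prod_(1 <= i < n.+1) x i.

Definition Ico0 {R : realType} (Rad : \bar R) : set R :=
  [set t | 0 <= t /\ (t%:E < Rad)%E].

Definition is_radius {R : realType} (a : nat -> R) (Rad : \bar R) : Prop :=
  (forall t : R, (`|t|%:E < Rad)%E -> cvgn (series (fun n => a n * t ^+ n))) /\
  (forall t : R, (Rad < `|t|%:E)%E -> ~ cvgn (series (fun n => a n * t ^+ n))).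

Definition Nser {R : realType} (x : nat -> R) (t : R) : R :=
  limn (series (fun n => t ^+ n / xfact x n)).

Definition xfactR {R : realType} (Rad : \bar R) (w : R -> R) (nu : R) : R :=
  fine (\int[@lebesgue_measure R]_(t in Ico0 Rad) (powR t nu * w t)%:E)%E.

(* S_k(t) = (1/N(t)) sum_{n>=0} x_{k/2+n}! / (x_n! x_{n+k}!) t^{n+k/2},
   the series (with nonnegative terms) being summed in the extended reals. *)
Definition Sk {R : realType} (x : nat -> R) (Rad : \bar R) (w : R -> R)
  (k : nat) (t : R) : \bar R :=
  ((Nser x t)^-1%:E *
   \sum_(n <oo) (xfactR Rad w (k%:R / 2 + n%:R) / (xfact x n * xfact x (n + k)%N)
                   * powR t (n%:R + k%:R / 2))%:E)%E.

(* Main.v *)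
Require Import Defs.
From HB Require Import structures.
From mathcomp Require Import all_boot all_order all_algebra.
From mathcomp Require Import all_classical all_reals all_analysis.
From mathcomp Require Import ring lra.
Import Order.TTheory GRing.Theory Num.Theory.
Import numFieldNormedType.Exports.
Local Open Scope classical_set_scope.
Local Open Scope ring_scope.

Lemma Ico0_meas (R : realType) (Rad : \bar R) : measurable (Ico0 Rad).
Proof.
case: Rad => [r| |].
- have -> : Ico0 r%:E = [set` `[0, r[%R] :> set R.
    apply/seteqP; split => t /=; rewrite in_itv /= ?lte_fin.
      by move=> [a b]; apply/andP; split => //; rewrite -lte_fin.
    by move=> /andP[a b]; split => //; rewrite lte_fin.
  exact: measurable_itv.
- have -> : Ico0 (+oo : \bar R) = [set` `[0, +oo[%R] :> set R.
    apply/seteqP; split => t /=; rewrite in_itv /= ?ltry andbT.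
      by move=> [->].
    by move=> a; split => //; rewrite ltry.
  exact: measurable_itv.
- have -> : Ico0 (-oo : \bar R) = set0.
    by apply/seteqP; split => t //= -[_]; rewrite ltNge leNye.
  exact: measurable0.
Qed.

Lemma powR_addn (R : realType) (a r : R) (n : nat) : 0 <= a -> 0 <= r ->
  a `^ (n%:R + r) = a ^+ n * a `^ r.
Proof.
move=> a0 r0; have [->|an0] := eqVneq a 0.
  case: n => [|n]; first by rewrite add0r expr0 mul1r.
  rewrite expr0n /= mul0r powR0 //.
  by rewrite gt_eqF // (@lt_le_trans _ _ (n.+1%:R)) ?ltr0n // lerDl.
by rewrite powRD ?an0 ?implybT // powR_mulrn.
Qed.

Lemma amgm (R : realType) (s t : R) (n k : nat) : 0 <= s -> 0 <= t ->
  s `^ (n%:R + k%:R / 2) * t `^ (n%:R + k%:R / 2) <=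
  (s ^+ n * t ^+ (n + k) + s ^+ (n + k) * t ^+ n) / 2.
Proof.
move=> s0 t0.
have k0 : 0 <= k%:R / 2 :> R by rewrite divr_ge0.
rewrite !powR_addn //.
set p := s `^ (k%:R / 2); set q := t `^ (k%:R / 2).
have hp : p ^+ 2 = s ^+ k.
  by rewrite /p -powR_mulrn ?powR_ge0 // -powRrM divfK ?pnatr_eq0 // powR_mulrn.
have hq : q ^+ 2 = t ^+ k.
  by rewrite /q -powR_mulrn ?powR_ge0 // -powRrM divfK ?pnatr_eq0 // powR_mulrn.
rewrite !exprD -hp -hq.
have A0 : 0 <= s ^+ n * t ^+ n by rewrite mulr_ge0 // exprn_ge0.
have : 0 <= s ^+ n * t ^+ n * (p - q) ^+ 2 by rewrite mulr_ge0 // sqr_ge0.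
move: A0; set A := s ^+ n; set B := t ^+ n => A0 H.
nra.
Qed.

Theorem mainTheorem3 (R : realType) (x : nat -> R) (Rad : \bar R) (w : R -> R)
  (hx0 : x 0%N = 0)
  (hxnn : forall n, 0 <= x n)
  (hxinc : forall n, x n < x n.+1)
  (hRadpos : (0 < Rad)%E)
  (hRadlim : (fun n => (x n.+1)%:E) @ \oo --> Rad)
  (hRadN : is_radius (fun n => (xfact x n)^-1) Rad)
  (hwmeas : measurable_fun (Ico0 Rad) w)
  (hwnn : forall t, Ico0 Rad t -> 0 <= w t)
  (hwprob : (\int[@lebesgue_measure R]_(t in Ico0 Rad) (w t)%:E = 1)%E)
  (hmom : forall n : nat,
     (\int[@lebesgue_measure R]_(t in Ico0 Rad) (t ^+ n * w t)%:E)%E = (xfact x n)%:E)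
  (hfin : forall nu : R, 0 <= nu ->
     (@lebesgue_measure R).-integrable (Ico0 Rad) (fun t => (powR t nu * w t)%:E)) :
  forall (k : nat) (t : R), 0 <= t -> (t%:E < Rad)%E ->
    (Sk x Rad w k t <= 1)%E.
Proof.
move=> k t t0 tR.
set D := Ico0 Rad.
have mD : measurable (D : set (g_sigma_algebraType R.-ocitv.-measurable)) by exact: Ico0_meas.
set mu := @lebesgue_measure R.
have hxpos : forall i, (0 < i)%N -> 0 < x i.
  elim=> [//|i IH] _; case: i IH => [|i] IH.
    by rewrite -hx0 hxinc.
  exact: lt_trans (IH isT) (hxinc _).
have hxf : forall n, 0 < xfact x n.
  move=> n; rewrite /xfact big_add1 /=; apply: prodr_gt0 => i _; exact: hxpos.
have hint : forall nu, 0 <= nu -> mu.-integrable D (EFin \o (fun s => powR s nu * w s)).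
  by move=> nu nu0; exact: hfin.
have hintZ : forall c nu, 0 <= nu ->
    mu.-integrable D (EFin \o (fun s => c * (powR s nu * w s))).
  move=> c nu nu0; have := integrableZl mD c (hint _ nu0); apply: eq_integrable => // s _.
have hInat : forall n : nat, xfactR Rad w n%:R = xfact x n.
  move=> n; rewrite /xfactR (_ : xfact x n = fine (xfact x n)%:E) // -(hmom n); congr fine; apply: eq_integral => s.
  by rewrite inE => -[s0 _]; rewrite powR_mulrn.
have hIge0 : forall nu, 0 <= xfactR Rad w nu.
  move=> nu; apply: Rintegral_ge0 => s Ds; rewrite mulr_ge0 ?powR_ge0 //; exact: hwnn.
set a := fun n => t ^+ n / xfact x n.
have ha0 : forall n, 0 <= a n by move=> n; rewrite /a divr_ge0 ?exprn_ge0 // ltW.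
have F3 : forall n, xfactR Rad w (k%:R / 2 + n%:R) * powR t (n%:R + k%:R / 2) <=
    (t ^+ (n + k) * xfact x n + t ^+ n * xfact x (n + k)) / 2.
  move=> n.
  have nk0 : 0 <= k%:R / 2 + n%:R :> R by rewrite addr_ge0 ?divr_ge0.
  rewrite -(hInat n) -(hInat (n + k)%N).
  change (Rintegral mu D (fun s => powR s (k%:R / 2 + n%:R) * w s) * powR t (n%:R + k%:R / 2)
    <= (t ^+ (n + k) * Rintegral mu D (fun s => powR s n%:R * w s)
       + t ^+ n * Rintegral mu D (fun s => powR s (n + k)%N%:R * w s)) / 2).
  have -> : (t ^+ (n + k) * Rintegral mu D (fun s => powR s n%:R * w s)
       + t ^+ n * Rintegral mu D (fun s => powR s (n + k)%N%:R * w s)) / 2 =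
     Rintegral mu D (fun s => (t ^+ (n + k) / 2) * (powR s n%:R * w s)
       + (t ^+ n / 2) * (powR s (n + k)%N%:R * w s)).
    rewrite RintegralD //; [|exact: hintZ|exact: hintZ].
    rewrite !RintegralZl //; [|exact: hint|exact: hint].
    by ring.
  rewrite [leLHS]mulrC -RintegralZl //; last exact: hint.
  apply: le_Rintegral => //; [exact: hintZ| |].
    apply: (eq_integrable mD _ _ _ (integrableD mD (hintZ (t ^+ (n + k) / 2) n%:R (ler0n _ _))
       (hintZ (t ^+ n / 2) (n + k)%N%:R (ler0n _ _)))) => s _.
    by rewrite /= EFinD.
  move=> s Ds; case: (Ds) => s0 _.
  have ws := hwnn s Ds.
  rewrite !powR_mulrn // (addrC (k%:R / 2)).
  have H2 := ler_wpM2r ws (@amgm _ s t n k s0 t0).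
  nra.
have F4 : forall n, xfactR Rad w (k%:R / 2 + n%:R) / (xfact x n * xfact x (n + k)%N)
            * powR t (n%:R + k%:R / 2) <= (a n + a (n + k)%N) / 2.
  move=> n; have := F3 n; have h1 := hxf n; have h2 := hxf (n + k)%N.
  rewrite mulrAC => H.
  apply: le_trans (ler_wpM2r _ H) _; first by rewrite invr_ge0 mulr_ge0 // ltW.
  rewrite le_eqVlt; apply/orP; left; apply/eqP; rewrite /a.
  by field; rewrite !gt_eqF.
have hN : (Nser x t)%:E = (\sum_(n <oo) (a n)%:E)%E.
  have hc : cvgn (series a).
    have := hRadN.1 t; rewrite ger0_norm // => /(_ tR).
    by rewrite (_ : a = fun n => (xfact x n)^-1 * t ^+ n) //; apply/funext => n; rewrite /a mulrC.
  rewrite /Nser -EFin_lim //.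
  apply: congr_lim; apply/funext => m /=.
  by rewrite /series /= sumEFin.
have hNpos : 0 < Nser x t.
  have : (1 <= (Nser x t)%:E)%E.
    rewrite hN; apply: (le_trans _ (@nneseries_lim_ge _ _ xpredT 0 1 _)); last first.
      by move=> i _ _; rewrite lee_fin.
    by rewrite big_nat1 /a expr0 /xfact big_geq // divr1.
  by rewrite lee_fin; apply: lt_le_trans.  
have hshift : (\sum_(n <oo) (a (n + k)%N)%:E <= \sum_(n <oo) (a n)%:E)%E.
  rewrite (@nneseries_addn _ (fun i => (a i)%:E)); last by move=> i; rewrite lee_fin.
  rewrite [leRHS](@nneseries_split _ _ 0 k); last by move=> i _; rewrite lee_fin.
  rewrite add0n; apply: leeDr; apply: sume_ge0 => i _.
  by rewrite lee_fin.
rewrite /Sk.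
have hS : (\sum_(n <oo) (xfactR Rad w (k%:R / 2 + n%:R) / (xfact x n * xfact x (n + k)%N)
                   * powR t (n%:R + k%:R / 2))%:E <= (Nser x t)%:E)%E.
  apply: (@le_trans _ _ (\sum_(n <oo) ((a n + a (n + k)%N) / 2)%:E)%E).
    apply: lee_nneseries => [n _ _|n _]; rewrite lee_fin; last exact: F4.
    apply: mulr_ge0; last exact: powR_ge0.
    apply: divr_ge0; first exact: hIge0.
    by apply: mulr_ge0; apply: ltW.
  have -> : (\sum_(n <oo) ((a n + a (n + k)%N) / 2)%:E =
      (2^-1)%:E * (\sum_(n <oo) (a n)%:E + \sum_(n <oo) (a (n + k)%N)%:E))%E.
    rewrite -nneseriesD; last 2 first.
      - by move=> n _ _; rewrite lee_fin.
      - by move=> n _ _; rewrite lee_fin.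
    rewrite -nneseriesZl; last by move=> n _; rewrite adde_ge0 // lee_fin.
    by apply: eq_eseriesr => n _; rewrite -EFinD -EFinM mulrC.
  rewrite -hN.
  apply: (@le_trans _ _ ((2^-1)%:E * ((Nser x t)%:E + (Nser x t)%:E))%E).
    apply: lee_wpmul2l; first by rewrite lee_fin invr_ge0.
    apply: leeD; first exact: lexx.
    rewrite hN; exact: hshift.
  by rewrite -EFinD -EFinM lee_fin; lra.
apply: le_trans (lee_wpmul2l _ hS) _.
  by rewrite lee_fin invr_ge0 ltW.
by rewrite -EFinM mulVf ?gt_eqF.
Qed.
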